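(* Let $m\in\mathbb{N}$ and $\beta\in(1,\mathcal{G}(m))$. There exists a constant $c(\beta)>0$, depending only on $\beta$ (and $m$), such that for every $x\in(0,\frac{m}{\beta-1})$, $\dim_H(\Sigma_{\beta,m}(x))\ge c(\beta)$.
   Context: $\mathcal{G}(m)=k+1$ if $m=2k$ and $\mathcal{G}(m)=\frac{k+1+\sqrt{k^2+6k+5}}{2}$ if $m=2k+1$. For $x\in[0,\frac{m}{\beta-1}]$, $\Sigma_{\beta,m}(x)=\{(\epsilon_i)_{i=1}^\infty\in\{0,\ldots,m\}^{\mathbb{N}}:\sum_{i\ge1}\epsilon_i\beta^{-i}=x\}$. The space $\{0,\ldots,m\}^{\mathbb{N}}$ carries the metric $d(x,y)=(m+1)^{-n(x,y)}$ for $x\ne y$, where $n(x,y)=\inf\{i:x_i\ne y_i\}$, and $d(x,x)=0$; Hausdorff dimension is taken with respect to $d$. *)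

(* Defs.v *)
From Stdlib Require Import Reals Lra ClassicalEpsilon.
From Coquelicot Require Import Coquelicot.
Open Scope R_scope.

Definition Gm (m : nat) : R :=
  let k := INR (Nat.div2 m) in
  if Nat.even m then k + 1
  else (k + 1 + sqrt (k ^ 2 + 6 * k + 5)) / 2.

(* Sequences (eps_1, eps_2, ...) are represented as e : nat -> nat with
   e i = eps_{i+1}. *)

Definition Sigma (beta : R) (m : nat) (x : R) (e : nat -> nat) : Prop :=
  (forall i, (e i <= m)%nat) /\
  is_series (fun i => INR (e i) / beta ^ (S i)) x.

(* n(x,y) = inf {i >= 1 : x_i <> y_i}; in 0-based indexing this is
   (least j with x j <> y j) + 1. *)
Definition first_diff (x y : nat -> nat) (j : nat) : Prop :=
  x j <> y j /\ forall i, (i < j)%nat -> x i = y i.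

Definition seqdist (m : nat) (x y : nat -> nat) : R :=
  match excluded_middle_informative (exists j, x j <> y j) with
  | left _ => / (INR (m + 1)) ^ (S (epsilon (inhabits 0%nat) (first_diff x y)))
  | right _ => 0
  end.

Definition diam (m : nat) (E : (nat -> nat) -> Prop) : Rbar :=
  Rbar_lub (fun r => r = Finite 0 \/
                     exists x y, E x /\ E y /\ r = Finite (seqdist m x y)).

(* t^s with the convention 0^s = 0 (used only for s > 0). *)
Definition pw (t s : R) : R :=
  match Req_EM_T t 0 with left _ => 0 | right _ => Rpower t s end.

Definition esum (u : nat -> R) : Rbar :=
  Sup_seq (fun n => Finite (sum_n u n)).

Definition hcontent (m : nat) (delta s : R) (A : (nat -> nat) -> Prop) : Rbar :=
  Rbar_glb (fun r => exists E : nat -> ((nat -> nat) -> Prop),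
    (forall x, A x -> exists i, E i x) /\
    (forall i, Rbar_le (diam m (E i)) (Finite delta)) /\
    r = esum (fun i => pw (real (diam m (E i))) s)).

Definition hmeasure (m : nat) (s : R) (A : (nat -> nat) -> Prop) : Rbar :=
  Rbar_lub (fun r => exists delta, 0 < delta /\ r = hcontent m delta s A).

(* Hausdorff dimension: inf {s > 0 : H^s(A) = 0} (inf of empty set = +oo). *)
Definition hdim (m : nat) (A : (nat -> nat) -> Prop) : Rbar :=
  Rbar_glb (fun r => exists s, 0 < s /\ r = Finite s /\ hmeasure m s A = Finite 0).

(* Main.v *)
Require Import Defs.
From Stdlib Require Import Reals Lra Lia Arith List Classical ClassicalEpsilon.
From Coquelicot Require Import Coquelicot.
Open Scope R_scope.

Definition cyl (k : nat) (c : nat -> bool) (s : nat -> bool) : Prop :=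
  forall j, (j < k)%nat -> s j = c j.

Fixpoint fs (f : nat -> R) (n : nat) : R :=
  match n with O => 0 | S n => fs f n + f n end.

Lemma fs_le f g n : (forall i, (i < n)%nat -> f i <= g i) -> fs f n <= fs g n.
Proof.
  induction n; simpl; intros H. lra.
  assert (f n <= g n) by (apply H; lia).
  assert (fs f n <= fs g n) by (apply IHn; intros; apply H; lia). lra.
Qed.

Lemma fs_plus f g n : fs (fun i => f i + g i) n = fs f n + fs g n.
Proof. induction n; simpl; [lra|]. rewrite IHn. lra. Qed.

Lemma fs_scal a f n : fs (fun i => a * f i) n = a * fs f n.
Proof. induction n; simpl; [lra|]. rewrite IHn. lra. Qed.

Lemma fs_ge0 f n : (forall i, 0 <= f i) -> 0 <= fs f n.
Proof. intro H; induction n; simpl; [lra|]. specialize (H n). lra. Qed.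

Lemma fs_ge_term f n i : (forall i, 0 <= f i) -> (i < n)%nat -> f i <= fs f n.
Proof.
  intros H; induction n; intros Hi; [lia|]. simpl.
  destruct (Nat.eq_dec i n) as [->|Hne].
  - pose proof (fs_ge0 f n H). lra.
  - assert (f i <= fs f n) by (apply IHn; lia). specialize (H n). lra.
Qed.

Lemma fs_geom n : fs (fun i => / 2 ^ (i + 2)) n = / 2 - / 2 ^ (n + 1).
Proof.
  induction n; simpl. field.
  rewrite IHn. replace (n + 2)%nat with (S (n + 1)) by lia. simpl.
  replace (S (n+1)) with (n+2)%nat by lia.
  assert (0 < 2 ^ (n+1)) by (apply pow_lt; lra). field. lra.
Qed.

Definition compat (k : nat) (c : nat -> bool) (L : nat) (q : nat -> bool) : Prop :=
  forall j, (j < k)%nat -> (j < L)%nat -> c j = q j.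

Definition rel (k : nat) (c : nat -> bool) (L : nat) (q : nat -> bool) : R :=
  if excluded_middle_informative (compat k c L q) then / 2 ^ (k - L) else 0.

Definition upd (q : nat -> bool) (L : nat) (b : bool) : nat -> bool :=
  fun j => if Nat.eqb j L then b else q j.

Lemma rel_ge0 k c L q : 0 <= rel k c L q.
Proof.
  unfold rel. destruct excluded_middle_informative; [|lra].
  left; apply Rinv_0_lt_compat, pow_lt; lra.
Qed.

Lemma rel_le k c L q : rel k c L q <= / 2 ^ (k - L).
Proof.
  unfold rel. destruct excluded_middle_informative; [lra|].
  left; apply Rinv_0_lt_compat, pow_lt; lra.
Qed.

Lemma rel_split k c L q :
  (rel k c (S L) (upd q L false) + rel k c (S L) (upd q L true)) / 2 <= rel k c L q.
Proof.
  assert (Hch : forall b, compat k c (S L) (upd q L b) -> compat k c L q).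
  { intros b H j Hj HL. rewrite (H j Hj ltac:(lia)). unfold upd.
    destruct (Nat.eqb_spec j L); [lia|auto]. }
  unfold rel at 3. destruct excluded_middle_informative as [Hc|Hc].
  - destruct (le_lt_dec k L) as [Hk|Hk].
    + pose proof (rel_le k c (S L) (upd q L false)).
      pose proof (rel_le k c (S L) (upd q L true)).
      replace (k - S L)%nat with O in * by lia.
      replace (k - L)%nat with O in * by lia. simpl in *. lra.
    + replace (k - L)%nat with (S (k - S L)) by lia.
      assert (0 < 2 ^ (k - S L)) by (apply pow_lt; lra).
      simpl.
      unfold rel. destruct excluded_middle_informative as [H0|H0];
      destruct excluded_middle_informative as [H1|H1].
      * exfalso. specialize (H0 L Hk ltac:(lia)). specialize (H1 L Hk ltac:(lia)).
        unfold upd in *. rewrite Nat.eqb_refl in *. congruence.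
      * rewrite Rinv_mult. lra.
      * rewrite Rinv_mult. lra.
      * pose proof (Rinv_0_lt_compat _ H). rewrite Rinv_mult.
        assert (0 < / 2 * / 2 ^ (k - S L)).
        { apply Rmult_lt_0_compat; lra. } lra.
  - unfold rel. destruct excluded_middle_informative as [H0|H0].
    { exfalso; apply Hc; eapply Hch; eauto. }
    destruct excluded_middle_informative as [H1|H1].
    { exfalso; apply Hc; eapply Hch; eauto. }
    lra.
Qed.

Lemma kraft_gen n (k : nat -> nat) (c : nat -> nat -> bool) : forall t L q,
  (forall i, (i < n)%nat -> (k i <= L + t)%nat) ->
  (forall s, cyl L q s -> exists i, (i < n)%nat /\ cyl (k i) (c i) s) ->
  1 <= fs (fun i => rel (k i) (c i) L q) n.
Proof.
  induction t; intros L q Hk Hcov.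
  - destruct (Hcov q) as [i [Hi Hc]]. { intros j _; reflexivity. }
    assert (rel (k i) (c i) L q = 1).
    { unfold rel. destruct excluded_middle_informative as [H|H].
      - replace (k i - L)%nat with O by (specialize (Hk i Hi); lia). simpl; lra.
      - exfalso; apply H. intros j Hj _. symmetry; apply Hc; auto. }
    rewrite <- H. apply (fs_ge_term (fun i => rel (k i) (c i) L q)); auto.
    intro; apply rel_ge0.
  - assert (H0 : 1 <= fs (fun i => rel (k i) (c i) (S L) (upd q L false)) n).
    { apply IHt. intros i Hi; specialize (Hk i Hi); lia.
      intros s Hs; apply Hcov. intros j Hj. rewrite (Hs j ltac:(lia)). unfold upd.
      destruct (Nat.eqb_spec j L); [lia|auto]. }
    assert (H1 : 1 <= fs (fun i => rel (k i) (c i) (S L) (upd q L true)) n).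
    { apply IHt. intros i Hi; specialize (Hk i Hi); lia.
      intros s Hs; apply Hcov. intros j Hj. rewrite (Hs j ltac:(lia)). unfold upd.
      destruct (Nat.eqb_spec j L); [lia|auto]. }
    assert (fs (fun i => / 2 * (rel (k i) (c i) (S L) (upd q L false) + rel (k i) (c i) (S L) (upd q L true))) n
            <= fs (fun i => rel (k i) (c i) L q) n).
    { apply fs_le. intros i _. pose proof (rel_split (k i) (c i) L q). lra. }
    rewrite fs_scal, fs_plus in H. lra.
Qed.

Lemma fin_max (k : nat -> nat) n : exists t, forall i, (i < n)%nat -> (k i <= t)%nat.
Proof.
  induction n. exists O; intros; lia.
  destruct IHn as [t Ht]. exists (Nat.max t (k n)). intros i Hi.
  destruct (Nat.eq_dec i n) as [->|]; [lia|]. specialize (Ht i ltac:(lia)); lia.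
Qed.

Lemma kraft n k c : (forall s, exists i, (i < n)%nat /\ cyl (k i) (c i) s) ->
  1 <= fs (fun i => / 2 ^ (k i)) n.
Proof.
  intros Hcov. destruct (fin_max k n) as [t Ht].
  pose proof (kraft_gen n k c t O (fun _ => false)) as H.
  assert (Heq : forall i, rel (k i) (c i) 0 (fun _ => false) = / 2 ^ (k i)).
  { intro i. unfold rel. destruct excluded_middle_informative as [_|Hn].
    - now rewrite Nat.sub_0_r.
    - exfalso; apply Hn; intros j _ Hj; lia. }
  assert (fs (fun i => rel (k i) (c i) 0 (fun _ => false)) n = fs (fun i => / 2 ^ (k i)) n).
  { clear -Heq. induction n; simpl; auto. rewrite IHn, Heq. auto. }
  rewrite <- H0. apply H; auto.
Qed.

Definition bad (k : nat -> nat) (c : nat -> nat -> bool) (L : nat) (q : nat -> bool) : Prop :=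
  forall n, exists s, cyl L q s /\ forall i, (i < n)%nat -> ~ cyl (k i) (c i) s.

Lemma bad_step k c L q : bad k c L q -> bad k c (S L) (upd q L false) \/ bad k c (S L) (upd q L true).
Proof.
  intros Hb.
  destruct (classic (bad k c (S L) (upd q L false))) as [H0|H0]; [now left|].
  destruct (classic (bad k c (S L) (upd q L true))) as [H1|H1]; [now right|].
  exfalso. unfold bad in H0, H1.
  apply not_all_ex_not in H0 as [n0 H0]. apply not_all_ex_not in H1 as [n1 H1].
  destruct (Hb (n0 + n1)%nat) as [s [Hs Hn]].
  assert (Hext : forall b, s L = b -> cyl (S L) (upd q L b) s).
  { intros b Hsb j Hj. unfold upd. destruct (Nat.eqb_spec j L); [subst; auto|].
    apply Hs; lia. }
  destruct (s L) eqn:E.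
  - apply H1. exists s. split; [apply Hext; auto|]. intros i Hi; apply Hn; lia.
  - apply H0. exists s. split; [apply Hext; auto|]. intros i Hi; apply Hn; lia.
Qed.

Fixpoint pth (k : nat -> nat) (c : nat -> nat -> bool) (L : nat) : nat -> bool :=
  match L with
  | O => fun _ => false
  | S L => let q := pth k c L in
      if excluded_middle_informative (bad k c (S L) (upd q L false))
      then upd q L false else upd q L true
  end.

Lemma pth_bad k c L : bad k c 0 (fun _ => false) -> bad k c L (pth k c L).
Proof.
  intros H0; induction L; simpl; auto.
  destruct excluded_middle_informative; auto.
  destruct (bad_step _ _ _ _ IHL); tauto.
Qed.

Lemma pth_stable k c L j : (j < L)%nat -> pth k c L j = pth k c (S j) j.
Proof.
  induction L; intros Hj; [lia|].
  destruct (Nat.eq_dec j L) as [->|Hne]; auto.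
  rewrite <- IHL by lia. simpl.
  destruct excluded_middle_informative; unfold upd;
  destruct (Nat.eqb_spec j L); try lia; auto.
Qed.

Lemma finite_subcover (k : nat -> nat) (c : nat -> nat -> bool) :
  (forall s, exists i, cyl (k i) (c i) s) ->
  exists n, forall s, exists i, (i < n)%nat /\ cyl (k i) (c i) s.
Proof.
  intros Hcov. apply NNPP; intro Hno.
  assert (Hb0 : bad k c 0 (fun _ => false)).
  { intro n. apply not_ex_all_not with (n := n) in Hno.
    apply not_all_ex_not in Hno as [s Hs]. exists s. split.
    - intros j Hj; lia.
    - intros i Hi Hc. apply Hs. exists i; auto. }
  set (sg := fun j => pth k c (S j) j).
  destruct (Hcov sg) as [i Hi].
  destruct (pth_bad k c (k i) Hb0 (S i)) as [s [Hs Hn]].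
  apply (Hn i ltac:(lia)). intros j Hj.
  rewrite Hs by auto. rewrite pth_stable by auto. apply Hi; auto.
Qed.

Lemma least_ex (P : nat -> Prop) n : P n ->
  exists j, (j <= n)%nat /\ P j /\ forall i, (i < j)%nat -> ~ P i.
Proof.
  induction n as [n IH] using (well_founded_induction lt_wf). intros Pn.
  destruct (classic (exists i, (i < n)%nat /\ P i)) as [[i [Hi Pi]]|Hno].
  - destruct (IH i Hi Pi) as [j [Hj [Pj Hl]]]. exists j; repeat split; auto; lia.
  - exists n; repeat split; auto. intros i Hi Pi; apply Hno; eauto.
Qed.

Lemma bounded_least (P : nat -> Prop) B :
  exists k, (k <= B)%nat /\ (forall j, (j < k)%nat -> ~ P j) /\ (k = B \/ P k).
Proof.
  induction B.
  - exists O; repeat split; auto; intros; lia.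
  - destruct IHB as [k [Hk [Hl Hor]]].
    destruct (classic (P k)) as [Pk|nPk].
    + exists k; repeat split; auto.
    + destruct Hor as [->|]; [|contradiction].
      exists (S B); repeat split; auto. intros j Hj.
      destruct (Nat.eq_dec j B) as [->|]; auto. apply Hl; lia.
Qed.

Lemma seqdist_lb m x y j : x j <> y j ->
  / INR (m + 1) ^ (S j) <= seqdist m x y.
Proof.
  intros Hj. unfold seqdist. destruct excluded_middle_informative as [He|He].
  2:{ exfalso; apply He; eauto. }
  assert (Hex : exists f, first_diff x y f).
  { destruct (least_ex (fun i => x i <> y i) j Hj) as [f [_ [Hf Hl]]].
    exists f; split; auto. intros i Hi. apply NNPP; intro; eapply Hl; eauto. }
  pose proof (epsilon_spec (inhabits 0%nat) (first_diff x y) Hex) as Hf.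
  set (f := epsilon (inhabits 0%nat) (first_diff x y)) in *.
  destruct Hf as [Hf1 Hf2].
  assert (f <= j)%nat.
  { destruct (le_lt_dec f j); auto. exfalso; apply Hj; apply Hf2; auto. }
  assert (1 <= INR (m + 1)) by (rewrite plus_INR; simpl; pose proof (pos_INR m); lra).
  apply Rinv_le_contravar. apply pow_lt; lra. apply Rle_pow; auto. lia.
Qed.

Lemma lub_ub (E : Rbar -> Prop) x : E x -> Rbar_le x (Rbar_lub E).
Proof. intro H. unfold Rbar_lub. destruct (Rbar_ex_lub E) as [l Hl]. simpl. apply (proj1 Hl); auto. Qed.

Lemma glb_ge (E : Rbar -> Prop) b : (forall x, E x -> Rbar_le b x) -> Rbar_le b (Rbar_glb E).
Proof. intro H. unfold Rbar_glb. destruct (Rbar_ex_glb E) as [l Hl]. simpl. apply (proj2 Hl); auto. Qed.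

Lemma diam_props m E : Rbar_le (diam m E) (Finite 1) ->
  exists D, diam m E = Finite D /\ 0 <= D <= 1 /\
    forall x y, E x -> E y -> seqdist m x y <= D.
Proof.
  intros H. unfold diam in *.
  assert (H0 := lub_ub (fun r => r = Finite 0 \/ exists x y, E x /\ E y /\ r = Finite (seqdist m x y)) (Finite 0) (or_introl eq_refl)).
  assert (Hub : forall x y, E x -> E y -> Rbar_le (Finite (seqdist m x y)) (Rbar_lub (fun r => r = Finite 0 \/ exists x y, E x /\ E y /\ r = Finite (seqdist m x y)))).
  { intros x y Ex Ey. apply lub_ub. right; eauto 6. }
  destruct (Rbar_lub _) as [D| |]; simpl in *; try contradiction.
  exists D; split; [reflexivity|]; split; [split; auto|exact Hub].
Qed.

Lemma ln_gt_0 x : 1 < x -> 0 < ln x.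
Proof. intro H. rewrite <- ln_1. apply ln_increasing; lra. Qed.

Section HL.
Variables (m N p : nat) (A : (nat -> nat) -> Prop) (Phi : (nat -> bool) -> nat -> nat).
Hypothesis Hm : (1 <= m)%nat.
Hypothesis HN : (1 <= N)%nat.
Hypothesis HA : forall s, A (Phi s).
Hypothesis HPhi : forall s t k, (forall i, (i < k)%nat -> s i = t i) -> s k <> t k ->
      exists j, (j < p + (S k) * N)%nat /\ Phi s j <> Phi t j.

Definition s0 := ln 2 / (INR N * ln (INR (m + 1))).

Lemma lnm_pos : 0 < ln (INR (m + 1)).
Proof.
  apply ln_gt_0. rewrite plus_INR. simpl. apply le_INR in Hm. simpl in Hm. lra.
Qed.

Lemma s0_pos : 0 < s0.
Proof.
  unfold s0. apply Rdiv_lt_0_compat. apply ln_gt_0; lra.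
  apply Rmult_lt_0_compat. apply lt_0_INR; lia. apply lnm_pos.
Qed.

Definition Qc := exp (- (INR p * ln 2 / INR N)).

Lemma key_pow k : Rpower (/ INR (m + 1) ^ (p + S k * N)) s0 = Qc * / 2 ^ (S k).
Proof.
  assert (HM : 0 < INR (m + 1)) by (apply lt_0_INR; lia).
  assert (HNp : 0 < INR N) by (apply lt_0_INR; lia).
  pose proof lnm_pos.
  unfold Rpower. rewrite ln_Rinv by (apply pow_lt; auto). rewrite ln_pow by auto.
  rewrite <- (Rpower_pow (S k) 2) by lra. unfold Rpower, Qc.
  rewrite <- exp_Ropp, <- exp_plus. f_equal.
  unfold s0. rewrite (plus_INR p), mult_INR. field. split; lra.
Qed.

Definition Cst := 2 / Qc.

Lemma Qc_pos : 0 < Qc. Proof. unfold Qc; apply exp_pos. Qed.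

Lemma per_i (E : (nat -> nat) -> Prop) (s : R) (i : nat) :
  0 < s <= s0 -> Rbar_le (diam m E) (Finite 1) ->
  exists kc : nat * (nat -> bool),
    (forall sg, E (Phi sg) -> cyl (fst kc) (snd kc) sg) /\
    / 2 ^ (fst kc) <= / 2 ^ (i + 2) + Cst * pw (real (diam m E)) s.
Proof.
  intros Hs Hd. destruct (diam_props m E Hd) as [D [HD [HD01 Hsd]]].
  rewrite HD. simpl.
  set (P := fun j => / INR (m + 1) ^ (p + S j * N) <= D).
  destruct (bounded_least P (i + 2)) as [k [Hk [Hl Hor]]].
  assert (HM : 0 < INR (m + 1)) by (apply lt_0_INR; lia).
  assert (Hpw0 : 0 <= pw D s).
  { unfold pw. destruct Req_EM_T; [lra|]. unfold Rpower; left; apply exp_pos. }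
  assert (Hbound : / 2 ^ k <= / 2 ^ (i + 2) + Cst * pw D s).
  { destruct Hor as [->|Pk].
    - assert (0 <= Cst * pw D s). { apply Rmult_le_pos; auto. unfold Cst. left; apply Rdiv_lt_0_compat; [lra|apply Qc_pos]. } lra.
    - unfold P in Pk.
      assert (Hpos : 0 < / INR (m + 1) ^ (p + S k * N)) by (apply Rinv_0_lt_compat, pow_lt; auto).
      assert (HDp : 0 < D) by lra.
      assert (H1 : Rpower (/ INR (m + 1) ^ (p + S k * N)) s0 <= Rpower D s0).
      { apply Rle_Rpower_l; [left; apply s0_pos| lra]. }
      rewrite key_pow in H1.
      assert (H2 : Rpower D s0 <= pw D s).
      { unfold pw. destruct Req_EM_T; [lra|]. unfold Rpower.
        assert (ln D <= 0) by (rewrite <- ln_1; apply ln_le; lra).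
        destruct (Req_dec (s0 * ln D) (s * ln D)) as [E'|E']; [rewrite E'; lra|].
        left; apply exp_increasing. pose proof s0_pos. nra. }
      assert (H3 : / 2 ^ k = 2 * / 2 ^ (S k)).
      { simpl. rewrite Rinv_mult. field. apply pow_nonzero; lra. }
      rewrite H3. pose proof Qc_pos.
      assert (/ 2 ^ S k <= pw D s / Qc).
      { apply (Rmult_le_reg_l Qc); auto. replace (Qc * (pw D s / Qc)) with (pw D s) by (field; lra). lra. }
      assert (0 < / 2 ^ (i+2)) by (apply Rinv_0_lt_compat, pow_lt; lra).
      unfold Cst. unfold Rdiv in *. nra. }
  destruct (classic (exists sg0, E (Phi sg0))) as [[sg0 H0]|Hno].
  - exists (k, sg0). simpl. split; auto.
    intros sg Hsg j Hj. apply NNPP; intro Hne.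
    destruct (least_ex (fun i => sg i <> sg0 i) j Hne) as [j' [Hj' [Hne' Hl']]].
    destruct (HPhi sg sg0 j') as [jj [Hjj Hdiff]].
    { intros i' Hi'. apply NNPP; intro; eapply Hl'; eauto. }
    auto.
    apply (Hl j'). lia. unfold P.
    eapply Rle_trans; [|apply (Hsd _ _ Hsg H0)].
    eapply Rle_trans; [|apply seqdist_lb; eauto].
    apply Rinv_le_contravar. apply pow_lt; auto. apply Rle_pow.
    rewrite plus_INR; simpl; pose proof (pos_INR m); lra. lia.
  - exists (k, fun _ => false). simpl. split; auto.
    intros sg Hsg; exfalso; eauto.
Qed.

Lemma hcontent_lb (s : R) : 0 < s <= s0 ->
  Rbar_le (Finite (/ (4 * Cst))) (hcontent m 1 s A).
Proof.
  intros Hs. unfold hcontent. apply glb_ge. intros r [E [Hcov [Hdiam ->]]].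
  set (u := fun i => pw (real (diam m (E i))) s).
  assert (HCst : 0 < Cst) by (unfold Cst; apply Rdiv_lt_0_compat; [lra|apply Qc_pos]).
  destruct (Rbar_le_lt_dec (Finite (/ (4 * Cst))) (esum u)) as [Hle|Hlt]; auto.
  exfalso.
  assert (Hsum : forall n, sum_n u n < / (4 * Cst)).
  { intro n. unfold esum in Hlt. rewrite Rbar_sup_eq_lub in Hlt.
    assert (Hub := lub_ub (fun x => exists n, x = Finite (sum_n u n)) (Finite (sum_n u n)) (ex_intro _ n eq_refl)).
    destruct (Rbar_lub _) as [l'| |]; simpl in *; try contradiction; lra. }
  assert (Hex : forall i, exists kc : nat * (nat -> bool),
    (forall sg, E i (Phi sg) -> cyl (fst kc) (snd kc) sg) /\
    / 2 ^ (fst kc) <= / 2 ^ (i + 2) + Cst * u i).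
  { intro i. apply per_i; auto. }
  set (F := fun i => proj1_sig (constructive_indefinite_description _ (Hex i))).
  assert (HF : forall i, (forall sg, E i (Phi sg) -> cyl (fst (F i)) (snd (F i)) sg) /\
    / 2 ^ (fst (F i)) <= / 2 ^ (i + 2) + Cst * u i).
  { intro i. unfold F. apply proj2_sig. }
  destruct (finite_subcover (fun i => fst (F i)) (fun i => snd (F i))) as [n Hn].
  { intro sg. destruct (Hcov (Phi sg) (HA sg)) as [i Hi]. exists i.
    apply (proj1 (HF i)); auto. }
  pose proof (kraft n _ _ Hn) as Hk.
  assert (Hle : fs (fun i => / 2 ^ (fst (F i))) n <= fs (fun i => / 2 ^ (i + 2) + Cst * u i) n).
  { apply fs_le. intros i _. apply (proj2 (HF i)). }
  rewrite fs_plus, fs_scal, fs_geom in Hle.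
  assert (0 < / 2 ^ (n + 1)) by (apply Rinv_0_lt_compat, pow_lt; lra).
  destruct n as [|n']. { simpl in Hk. lra. }
  assert (Heq : fs u (S n') = sum_n u n').
  { clear. induction n'. simpl. rewrite sum_O. lra.
    rewrite sum_Sn. simpl in *. rewrite IHn'. reflexivity. }
  rewrite Heq in Hle. specialize (Hsum n').
  assert (Cst * sum_n u n' < Cst * / (4 * Cst)) by (apply Rmult_lt_compat_l; auto).
  replace (Cst * / (4 * Cst)) with (/4) in H0 by (field; lra). lra.
Qed.

Lemma hmeasure_pos (s : R) : 0 < s <= s0 -> hmeasure m s A <> Finite 0.
Proof.
  intros Hs Heq. pose proof (hcontent_lb s Hs) as H.
  unfold hmeasure in Heq.
  assert (Hub := lub_ub (fun r => exists delta, 0 < delta /\ r = hcontent m delta s A) (hcontent m 1 s A) (ex_intro _ 1 (conj Rlt_0_1 eq_refl))).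
  rewrite Heq in Hub.
  assert (HCst : 0 < Cst) by (unfold Cst; apply Rdiv_lt_0_compat; [lra|apply Qc_pos]).
  assert (0 < / (4 * Cst)) by (apply Rinv_0_lt_compat; lra).
  destruct (hcontent m 1 s A); simpl in *; lra.
Qed.

Lemma hdim_lb : Rbar_le (Finite s0) (hdim m A).
Proof.
  unfold hdim. apply glb_ge. intros r [s [Hs [-> H0]]]. simpl.
  destruct (Rle_lt_dec s0 s); auto. exfalso.
  apply (hmeasure_pos s); auto. lra.
Qed.

End HL.

Lemma nat_floor v : 0 <= v -> exists a : nat, INR a <= v < INR a + 1.
Proof.
  intros Hv. destruct (INR_unbounded v) as [n Hn].
  destruct (least_ex (fun n => v < INR n) n ltac:(simpl; lra)) as [j [_ [Hj Hl]]].
  destruct j as [|a]. { simpl in Hj; lra. }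
  exists a. rewrite S_INR in Hj. split; [|lra].
  destruct (Rle_dec (INR a) v); auto. exfalso; apply (Hl a); [lia|lra].
Qed.

Lemma pow_unbounded b C : 1 < b -> exists n, C <= b ^ n.
Proof.
  intros Hb. destruct (Pow_x_infinity b ltac:(rewrite Rabs_right; lra) C) as [n Hn].
  exists n. specialize (Hn n (Nat.le_refl n)). rewrite Rabs_right in Hn. lra.
  apply Rle_ge, pow_le; lra.
Qed.

Section Dyn.
Variables (m : nat) (b eps : R).
Hypothesis Hm : (1 <= m)%nat.
Hypothesis Hb : 1 < b.

Definition MM := INR m / (b - 1).
Definition ww := 1 - MM / 2 + eps.

Hypothesis He0 : 0 < eps.
Hypothesis Hc1 : 2 * eps <= MM - 1.
Hypothesis Hc2 : ww <= / (2 * (b + 1)).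
Hypothesis Hc3 : eps <= MM / (2 * b).
Hypothesis Hc4 : (exists k, m = (2 * k + 1)%nat) \/ ww <= 0.
Hypothesis Hc5 : eps * (b + 1) <= MM.

Definition inK y := eps <= y <= MM - eps.
Definition inJ y := 0 <= y <= MM.

Fixpoint Tw (y : R) (w : list nat) : R :=
  match w with nil => y | d :: w' => Tw (b * y - INR d) w' end.

Fixpoint okw (P : R -> Prop) (y : R) (w : list nat) : Prop :=
  match w with
  | nil => True
  | d :: w' => (d <= m)%nat /\ P (b * y - INR d) /\ okw P (b * y - INR d) w'
  end.

Lemma Tw_app y u v : Tw y (u ++ v) = Tw (Tw y u) v.
Proof. revert y; induction u; simpl; auto. Qed.

Lemma okw_app P y u v : okw P y u -> okw P (Tw y u) v -> okw P y (u ++ v).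
Proof. revert y; induction u; simpl; auto. intros y [? [? ?]] ?; auto. Qed.

Lemma okw_last P y w : P y -> okw P y w -> P (Tw y w).
Proof. revert y; induction w; simpl; auto. intros y _ [? [? ?]]; auto. Qed.

Lemma okw_mono (P Q : R -> Prop) y w : (forall z, P z -> Q z) -> okw P y w -> okw Q y w.
Proof. intros HPQ; revert y; induction w; simpl; auto. intros y [? [? ?]]; auto. Qed.

Definition branch y := exists d1 d2, d1 <> d2 /\ (d1 <= m)%nat /\ (d2 <= m)%nat /\
  inK (b * y - INR d1) /\ inK (b * y - INR d2).

Lemma MM_gt1 : 1 < MM.
Proof. lra. Qed.

Lemma bMM : b * MM = MM + INR m.
Proof. unfold MM. field. lra. Qed.

Lemma mpos : 1 <= INR m.
Proof. apply le_INR in Hm. simpl in Hm. lra. Qed.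

Lemma eps_le_half : eps <= MM / 2.
Proof.
  assert (MM / (2 * b) <= MM / 2).
  { unfold Rdiv. apply Rmult_le_compat_l. lra.
    apply Rinv_le_contravar; lra. } lra.
Qed.

Lemma floor_in v : 0 <= v <= INR m ->
  exists a : nat, (a + 1 <= m)%nat /\ INR a <= v <= INR a + 1.
Proof.
  intros Hv. destruct (nat_floor v ltac:(lra)) as [a Ha].
  destruct (le_lt_dec (a + 1) m) as [H|H].
  - exists a; split; auto; lra.
  - assert (a = m \/ (m < a)%nat) as [->|Hma] by lia.
    + exists (m - 1)%nat. split; [lia|]. rewrite minus_INR by lia. simpl. lra.
    + apply lt_INR in Hma. lra.
Qed.

Lemma claimB y : MM / 2 <= b * y <= MM / 2 + INR m ->
  branch y \/ exists d, (d <= m)%nat /\ Rabs (b * y - INR d - MM / 2) < ww.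
Proof.
  intros Hy. destruct (floor_in (b * y - MM / 2) ltac:(lra)) as [a [Ha Hv]].
  pose proof eps_le_half.
  destruct (Rle_dec (b * y - MM / 2 - INR a) (MM / 2 - eps)) as [Hp|Hp];
  destruct (Rle_dec (INR a + 1 - (b * y - MM / 2)) (MM / 2 - eps)) as [Hq|Hq].
  - left. exists a, (S a). repeat split; try lia; rewrite ?S_INR; lra.
  - right. exists a. split; [lia|]. unfold ww. rewrite Rabs_right; lra.
  - right. exists (S a). split; [lia|]. rewrite S_INR. unfold ww.
    rewrite Rabs_left1; lra.
  - lra.
Qed.

Lemma small_good y d : Rabs (b * y - INR d - MM / 2) < ww -> inK (b * y - INR d).
Proof.
  intros H. apply Rabs_def2 in H. unfold inK, ww in *. lra.
Qed.

Lemma claimD y : Rabs (y - MM / 2) < ww -> branch y.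
Proof.
  intros Hz.
  assert (Hw0 : 0 < ww) by (pose proof (Rabs_pos (y - MM/2)); lra).
  assert (Hbw : b * ww <= b / (2 * (b + 1))).
  { unfold Rdiv. apply Rmult_le_compat_l; lra. }
  assert (Hhalf : b / (2 * (b + 1)) < / 2).
  { apply (Rmult_lt_reg_l (2 * (b + 1))). lra. field_simplify; lra. }
  assert (Hbz : Rabs (b * (y - MM / 2)) < b * ww).
  { rewrite Rabs_mult, Rabs_right by lra. apply Rmult_lt_compat_l; lra. }
  assert (Heq : b * y - MM / 2 = b * (y - MM / 2) + INR m / 2).
  { pose proof bMM. replace (b * (y - MM / 2)) with (b * y - b * MM / 2) by (unfold Rdiv; ring). lra. }
  pose proof mpos.
  apply Rabs_def2 in Hbz as [Hbz1 Hbz2].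
  destruct (claimB y) as [Hbr|[d [Hd Hs]]]; [lra|auto|].
  exfalso. destruct Hc4 as [[k Hk]|Hw]; [|lra].
  replace (b * y - INR d - MM / 2) with (b * (y - MM / 2) + INR m / 2 - INR d) in Hs by lra.
  rewrite Hk, plus_INR, mult_INR in Hs. simpl in Hs.
  apply Rabs_def2 in Hs as [Hs1 Hs2].
  assert (Hc : ww * (1 + b) <= / 2).
  { apply Rle_trans with (/ (2 * (b + 1)) * (1 + b)). apply Rmult_le_compat_r; lra. right; field; lra. }
  destruct (le_lt_dec d k) as [Hdk|Hdk].
  - apply le_INR in Hdk. nra.
  - apply le_INR in Hdk. rewrite S_INR in Hdk. nra.
Qed.

Definition inV y := MM / 2 <= b * y <= MM / 2 + INR m.

Lemma good_digit y : inK y -> exists d, (d <= m)%nat /\ inK (b * y - INR d).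
Proof.
  intros Hy. pose proof eps_le_half. pose proof bMM. unfold inK in *.
  destruct (Rlt_le_dec (b * y) (MM / 2)) as [H1|H1].
  { exists O. split; [lia|]. simpl. split; nra. }
  destruct (Rlt_le_dec (MM / 2 + INR m) (b * y)) as [H2|H2].
  { exists m. split; [lia|]. split; nra. }
  destruct (claimB y (conj H1 H2)) as [[d1 [d2 [_ [Hd1 [_ [Hk _]]]]]]|[d [Hd Hs]]].
  - exists d1; auto.
  - exists d; split; auto. apply small_good; auto.
Qed.

Lemma pad L y : inK y -> exists w, length w = L /\ okw inK y w.
Proof.
  revert y; induction L; intros y Hy.
  - exists nil; simpl; auto.
  - destruct (good_digit y Hy) as [d [Hd Hk]].
    destruct (IHL _ Hk) as [w [Hl Hw]]. exists (d :: w). simpl; auto.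
Qed.

Lemma reachV n : forall y, inK y -> MM / 2 <= b ^ n * y -> MM / 2 <= b ^ n * (MM - y) ->
  exists w, (length w <= n)%nat /\ okw inK y w /\ inV (Tw y w).
Proof.
  pose proof eps_le_half. pose proof bMM.
  induction n; intros y Hy H1 H2.
  - exists nil; simpl. split; [lia|split; auto]. unfold inV, inK in *. simpl in *. nra.
  - unfold inK in Hy.
    assert (Hbn : 1 <= b ^ n) by (apply pow_R1_Rle; lra).
    destruct (Rlt_le_dec (b * y) (MM / 2)) as [Hl|Hl].
    + assert (Hk : inK (b * y - INR 0)) by (unfold inK; simpl; split; nra).
      destruct (IHn (b * y - INR 0) Hk) as [w [Hlen [Hok HV]]].
      { simpl. simpl in H1. lra. }
      { simpl. nra. }
      exists (0%nat :: w). split; [simpl; lia|]. split; [|exact HV]. split; [lia|]. split; auto.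
    + destruct (Rlt_le_dec (MM / 2 + INR m) (b * y)) as [Hh|Hh].
      * assert (Hk : inK (b * y - INR m)) by (unfold inK; split; nra).
        destruct (IHn (b * y - INR m) Hk) as [w [Hlen [Hok HV]]].
        { nra. }
        { replace (MM - (b * y - INR m)) with (b * (MM - y)) by lra.
          simpl in H2. lra. }
        exists (m :: w). split; [simpl; lia|]. split; [|exact HV]. split; [lia|]. split; auto.
      * exists nil. simpl. split; [lia|]. split; auto. unfold inV; lra.
Qed.

Lemma reach_branch A : MM / 2 <= b ^ A * eps ->
  forall y, inK y -> exists w, (length w <= S A)%nat /\ okw inK y w /\ branch (Tw y w).
Proof.
  intros HA y Hy.
  assert (Hp : 0 < b ^ A) by (apply pow_lt; lra).
  destruct (reachV A y Hy) as [w [Hl [Hok HV]]].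
  { unfold inK in Hy. nra. }
  { unfold inK in Hy. nra. }
  destruct (claimB _ HV) as [Hbr|[d [Hd Hs]]].
  - exists w; split; [lia|]; auto.
  - exists (w ++ d :: nil). rewrite length_app. simpl. split; [lia|].
    split.
    + apply okw_app; auto. simpl. split; [auto|]. split; [apply small_good; auto|auto].
    + rewrite Tw_app. simpl. apply claimD.
      replace (b * Tw y w - INR d - MM / 2) with (b * Tw y w - INR d - MM / 2) in Hs by lra.
      exact Hs.
Qed.

Lemma blocks A : MM / 2 <= b ^ A * eps ->
  forall y, inK y -> exists u0 u1, length u0 = (A + 2)%nat /\ length u1 = (A + 2)%nat /\
    okw inK y u0 /\ okw inK y u1 /\
    exists r, (r < A + 2)%nat /\ nth r u0 O <> nth r u1 O.
Proof.
  intros HA y Hy. destruct (reach_branch A HA y Hy) as [w [Hl [Hok Hbr]]].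
  destruct Hbr as [d1 [d2 [Hne [Hd1 [Hd2 [Hk1 Hk]]]]]].
  destruct (pad (A + 1 - length w) _ Hk1) as [v1 [Hv1 Hok1]].
  destruct (pad (A + 1 - length w) _ Hk) as [v2 [Hv2 Hok2]].
  exists (w ++ d1 :: v1), (w ++ d2 :: v2).
  rewrite !length_app. simpl. rewrite Hv1, Hv2.
  split; [lia|]. split; [lia|].
  split; [apply okw_app; simpl; auto|].
  split; [apply okw_app; simpl; auto|].
  exists (length w). split; [lia|].
  rewrite !app_nth2 by lia. rewrite Nat.sub_diag. simpl. auto.
Qed.

Lemma prefix_ex n : forall x, 0 < x < MM -> eps <= b ^ n * x -> eps <= b ^ n * (MM - x) ->
  exists p0, okw inJ x p0 /\ inK (Tw x p0).
Proof.
  pose proof bMM.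
  induction n; intros x Hx H1 H2.
  - exists nil. simpl in *. unfold inK. lra.
  - assert (Hbn : 1 <= b ^ n) by (apply pow_R1_Rle; lra).
    simpl in H1, H2.
    destruct (Rlt_le_dec x eps) as [Hl|Hl].
    + destruct (IHn (b * x - INR 0)) as [p0 [Hok HK]].
      { simpl. split; nra. }
      { simpl. replace (b ^ n * (b * x - 0)) with (b * b ^ n * x) by ring; lra. }
      { simpl. assert (eps <= MM - b * x) by nra. rewrite Rminus_0_r. nra. }
      exists (0%nat :: p0). split; [|exact HK]. split; [lia|]. split; auto.
      unfold inJ; simpl; split; nra.
    + destruct (Rlt_le_dec (MM - eps) x) as [Hh|Hh].
      * destruct (IHn (b * x - INR m)) as [p0 [Hok HK]].
        { split; nra. }
        { assert (eps <= b * x - INR m) by nra. nra. }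
        { replace (MM - (b * x - INR m)) with (b * (MM - x)) by lra.
          replace (b ^ n * (b * (MM - x))) with (b * b ^ n * (MM - x)) by ring. lra. }
        exists (m :: p0). split; [|exact HK]. split; [lia|]. split; auto.
        unfold inJ; split; nra.
      * exists nil. simpl. split; auto. unfold inK; lra.
Qed.

Lemma prefix x : 0 < x < MM -> exists p0, okw inJ x p0 /\ inK (Tw x p0).
Proof.
  intros Hx. destruct (pow_unbounded b (eps / x + eps / (MM - x)) Hb) as [n Hn].
  apply (prefix_ex n); auto.
  - assert (0 < eps / (MM - x)) by (apply Rdiv_lt_0_compat; lra).
    assert (eps / x <= b ^ n) by lra.
    apply (Rmult_le_compat_r x) in H0; [|lra].
    unfold Rdiv in H0. rewrite Rmult_assoc, Rinv_l in H0; lra.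
  - assert (0 < eps / x) by (apply Rdiv_lt_0_compat; lra).
    assert (eps / (MM - x) <= b ^ n) by lra.
    apply (Rmult_le_compat_r (MM - x)) in H0; [|lra].
    unfold Rdiv in H0. rewrite Rmult_assoc, Rinv_l in H0; lra.
Qed.

End Dyn.

Lemma fs_sum_n (u : nat -> R) n : fs u (S n) = sum_n u n.
Proof.
  induction n. simpl. rewrite sum_O. lra.
  rewrite sum_Sn. simpl in *. rewrite IHn. reflexivity.
Qed.

Lemma firstn_S_nth (L : list nat) i : (i < length L)%nat ->
  firstn (S i) L = firstn i L ++ nth i L O :: nil.
Proof.
  revert i; induction L; simpl; intros i Hi; [lia|].
  destruct i; [reflexivity|].
  change (firstn (S (S i)) (a :: L)) with (a :: firstn (S i) L).
  change (firstn (S i) (a :: L)) with (a :: firstn i L).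
  rewrite IHL by lia. reflexivity.
Qed.

Section Build.
Variables (m : nat) (b eps : R) (A : nat).
Hypothesis Hm : (1 <= m)%nat.
Hypothesis Hb : 1 < b.
Hypothesis He0 : 0 < eps.
Hypothesis Hc1 : 2 * eps <= MM m b - 1.
Hypothesis Hc2 : ww m b eps <= / (2 * (b + 1)).
Hypothesis Hc3 : eps <= MM m b / (2 * b).
Hypothesis Hc4 : (exists k, m = (2 * k + 1)%nat) \/ ww m b eps <= 0.
Hypothesis Hc5 : eps * (b + 1) <= MM m b.
Hypothesis HA : MM m b / 2 <= b ^ A * eps.

Let N := (A + 2)%nat.
Let K := inK m b eps.
Let T := Tw b.
Let ok := okw m b.

Definition Bspec (y : R) (pr : list nat * list nat) : Prop :=
  K y -> length (fst pr) = N /\ length (snd pr) = N /\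
    ok K y (fst pr) /\ ok K y (snd pr) /\
    exists r, (r < N)%nat /\ nth r (fst pr) O <> nth r (snd pr) O.

Lemma Bex y : exists pr, Bspec y pr.
Proof.
  destruct (classic (K y)) as [Hy|Hy].
  - destruct (blocks m b eps Hm Hb He0 Hc1 Hc2 Hc4 A HA y Hy) as [u0 [u1 H]].
    exists (u0, u1). intros _. exact H.
  - exists (nil, nil). intro; contradiction.
Qed.

Definition Fb (y : R) : list nat * list nat :=
  proj1_sig (constructive_indefinite_description _ (Bex y)).

Lemma Fb_spec y : Bspec y (Fb y).
Proof. unfold Fb. apply proj2_sig. Qed.

Definition sel (bt : bool) (pr : list nat * list nat) := if bt then snd pr else fst pr.

Fixpoint Yf (y0 : R) (sg : nat -> bool) (n : nat) : R :=
  match n with O => y0 | S n => T (Yf y0 sg n) (sel (sg n) (Fb (Yf y0 sg n))) end.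

Definition Wd y0 sg n := sel (sg n) (Fb (Yf y0 sg n)).

Fixpoint Lf (p0 : list nat) (y0 : R) (sg : nat -> bool) (n : nat) : list nat :=
  match n with O => p0 | S n => Lf p0 y0 sg n ++ Wd y0 sg n end.

Definition ef p0 y0 sg (i : nat) : nat := nth i (Lf p0 y0 sg (S i)) O.

Section Fixed.
Variables (x : R) (p0 : list nat).
Let y0 := T x p0.
Hypothesis Hp0 : ok (inJ m b) x p0.
Hypothesis Hy0 : K y0.
Hypothesis Hx : inJ m b x.

Lemma Yf_K sg n : K (Yf y0 sg n).
Proof.
  induction n; simpl; auto.
  destruct (Fb_spec (Yf y0 sg n) IHn) as [_ [_ [H0 [H1 _]]]].
  destruct (sg n); simpl; apply (okw_last m b); auto.
Qed.

Lemma Wd_spec sg n : length (Wd y0 sg n) = N /\ ok K (Yf y0 sg n) (Wd y0 sg n).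
Proof.
  destruct (Fb_spec (Yf y0 sg n) (Yf_K sg n)) as [H0 [H1 [H2 [H3 _]]]].
  unfold Wd. destruct (sg n); simpl; auto.
Qed.

Lemma Lf_len sg n : length (Lf p0 y0 sg n) = (length p0 + n * N)%nat.
Proof.
  induction n; simpl; [lia|]. rewrite length_app, IHn, (proj1 (Wd_spec sg n)). lia.
Qed.

Lemma Lf_T sg n : T x (Lf p0 y0 sg n) = Yf y0 sg n.
Proof.
  induction n; simpl; auto. unfold T in *. rewrite Tw_app, IHn. reflexivity.
Qed.

Lemma KJ z : K z -> inJ m b z.
Proof.
  unfold K, inK, inJ. intros. pose proof (MM_gt1 m b eps He0 Hc1). lra.
Qed.

Lemma Lf_ok sg n : ok (inJ m b) x (Lf p0 y0 sg n).
Proof.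
  induction n; simpl; auto. apply okw_app; auto. unfold T in *.
  fold (T x (Lf p0 y0 sg n)). rewrite Lf_T.
  apply (okw_mono m b K); [apply KJ|]. apply (proj2 (Wd_spec sg n)).
Qed.

Lemma Lf_prefix sg n n' : (n <= n')%nat -> exists t, Lf p0 y0 sg n' = Lf p0 y0 sg n ++ t.
Proof.
  induction 1. exists nil; rewrite app_nil_r; auto.
  destruct IHle as [t Ht]. exists (t ++ Wd y0 sg m0). simpl. rewrite Ht, app_assoc. auto.
Qed.

Lemma ef_nth sg n i : (i < length (Lf p0 y0 sg n))%nat -> ef p0 y0 sg i = nth i (Lf p0 y0 sg n) O.
Proof.
  intros Hi. unfold ef.
  assert (HN : (1 <= N)%nat) by (unfold N; lia).
  destruct (le_lt_dec n (S i)) as [H|H].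
  - destruct (Lf_prefix sg n (S i) H) as [t ->]. rewrite app_nth1; auto.
  - destruct (Lf_prefix sg (S i) n ltac:(lia)) as [t ->]. rewrite app_nth1; auto.
    rewrite Lf_len. nia.
Qed.

Lemma okw_firstn (P : R -> Prop) y w : P y -> ok P y w ->
  forall i, (i <= length w)%nat -> P (T y (firstn i w)).
Proof.
  unfold ok, T. revert y; induction w; intros y Py Hw i Hi.
  - simpl in Hi. replace i with O by lia. simpl; auto.
  - destruct i; simpl; auto. destruct Hw as [_ [HP Hw]]. apply IHw; auto. simpl in Hi; lia.
Qed.

Fixpoint Zs (e : nat -> nat) (i : nat) : R :=
  match i with O => x | S i => b * Zs e i - INR (e i) end.

Lemma Zs_T e L : (forall j, (j < length L)%nat -> e j = nth j L O) ->
  forall i, (i <= length L)%nat -> Zs e i = T x (firstn i L).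
Proof.
  intros He. induction i; intros Hi; [reflexivity|]. change (Zs e (S i)) with (b * Zs e i - INR (e i)).
  rewrite firstn_S_nth by lia. unfold T in *. rewrite Tw_app. simpl.
  rewrite IHi by lia. rewrite He by lia. reflexivity.
Qed.

Lemma Zs_J sg i : inJ m b (Zs (ef p0 y0 sg) i).
Proof.
  assert (HN : (1 <= N)%nat) by (unfold N; lia).
  assert (Hi : (i <= length (Lf p0 y0 sg i))%nat) by (rewrite Lf_len; nia).
  rewrite (Zs_T _ (Lf p0 y0 sg i)); auto.
  - apply okw_firstn; auto. apply Lf_ok.
  - intros j Hj. apply ef_nth; auto.
Qed.

Lemma okw_digits (P : R -> Prop) y w : ok P y w -> forall i, (i < length w)%nat -> (nth i w O <= m)%nat.
Proof.
  unfold ok. revert y; induction w; simpl; intros y Hw i Hi; [lia|].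
  destruct Hw as [Hd [_ Hw]]. destruct i; auto. apply (IHw _ Hw). lia.
Qed.

Lemma ef_le sg i : (ef p0 y0 sg i <= m)%nat.
Proof.
  assert (HN : (1 <= N)%nat) by (unfold N; lia).
  unfold ef. apply (okw_digits (inJ m b) x). apply Lf_ok. rewrite Lf_len. nia.
Qed.

Lemma ef_series sg : is_series (fun i => INR (ef p0 y0 sg i) / b ^ (S i)) x.
Proof.
  set (e := ef p0 y0 sg). set (u := fun i => INR (e i) / b ^ (S i)).
  assert (Hid : forall n, x - fs u n = Zs e n / b ^ n).
  { induction n. simpl. field.
    change (fs u (S n)) with (fs u n + u n). change (Zs e (S n)) with (b * Zs e n - INR (e n)).
    assert (b ^ n <> 0) by (apply pow_nonzero; lra).
    assert (Hu : u n = INR (e n) / (b * b ^ n)) by reflexivity. rewrite Hu. replace (x - (fs u n + INR (e n) / (b * b ^ n))) with ((x - fs u n) - INR (e n) / (b * b ^ n)) by ring.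
    rewrite IHn. simpl. field. split; lra. }
  assert (HMb : 0 < MM m b) by (pose proof (MM_gt1 m b eps He0 Hc1); lra).
  assert (Hbd : forall n, x - (MM m b * / b) * (/ b) ^ n <= sum_n u n <= x).
  { intro n. rewrite <- fs_sum_n.
    assert (Hz := Hid (S n)). pose proof (Zs_J sg (S n)) as HJ. unfold inJ in HJ. fold e in HJ.
    assert (Hp : 0 < b ^ S n) by (apply pow_lt; lra).
    set (z := Zs e (S n)) in *.
    assert (Hq : z / b ^ S n <= MM m b * / b * (/ b) ^ n).
    { rewrite <- Rinv_pow by lra.
      replace (MM m b * / b * / b ^ n) with (MM m b / b ^ (S n)) by (simpl; field; split; [apply pow_nonzero|]; lra).
      unfold Rdiv. apply Rmult_le_compat_r; [left; apply Rinv_0_lt_compat; auto| lra]. }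
    assert (0 <= z / b ^ S n) by (apply Rdiv_le_0_compat; lra).
    lra. }
  assert (Hlim1 : is_lim_seq (fun n => (MM m b * / b) * (/ b) ^ n) 0).
  { replace (Finite 0) with (Rbar_mult (MM m b * / b) 0) by (simpl; f_equal; ring).
    apply is_lim_seq_scal_l, is_lim_seq_geom.
    rewrite Rabs_right. apply (Rmult_lt_reg_l b); [lra|]. rewrite Rinv_r; lra.
    left; apply Rinv_0_lt_compat; lra. }
  assert (Hlim2 := is_lim_seq_minus' _ _ _ _ (is_lim_seq_const x) Hlim1).
  rewrite Rminus_0_r in Hlim2.
  assert (H := is_lim_seq_le_le _ (sum_n u) _ x Hbd Hlim2 (is_lim_seq_const x)).
  exact H.
Qed.

Lemma ef_Sigma sg : Sigma b m x (ef p0 y0 sg).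
Proof. split; [apply ef_le|apply ef_series]. Qed.

Lemma agree_upto sg tg k : (forall i, (i < k)%nat -> sg i = tg i) ->
  forall n, (n <= k)%nat -> Yf y0 sg n = Yf y0 tg n /\ Lf p0 y0 sg n = Lf p0 y0 tg n.
Proof.
  intros Hag. induction n; intros Hn; simpl; auto.
  destruct (IHn ltac:(lia)) as [H1 H2]. unfold Wd.
  rewrite H1, H2, (Hag n ltac:(lia)). auto.
Qed.

Lemma ef_diff sg tg k : (forall i, (i < k)%nat -> sg i = tg i) -> sg k <> tg k ->
  exists j, (j < length p0 + S k * N)%nat /\ ef p0 y0 sg j <> ef p0 y0 tg j.
Proof.
  intros Hag Hk. destruct (agree_upto sg tg k Hag k (le_n k)) as [HY HL].
  destruct (Fb_spec (Yf y0 sg k) (Yf_K sg k)) as [Hl0 [Hl1 [_ [_ [r [Hr Hne]]]]]].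
  exists (length p0 + k * N + r)%nat. split; [lia|].
  assert (Hsg : forall tg', Lf p0 y0 tg' k = Lf p0 y0 sg k -> Yf y0 tg' k = Yf y0 sg k ->
    ef p0 y0 tg' (length p0 + k * N + r) = nth r (Wd y0 tg' k) O).
  { intros tg' HL' HY'. rewrite (ef_nth tg' (S k)).
    - simpl. rewrite app_nth2; rewrite Lf_len; [|lia]. f_equal. lia.
    - rewrite Lf_len. nia. }
  rewrite (Hsg sg eq_refl eq_refl), (Hsg tg (eq_sym HL) (eq_sym HY)).
  unfold Wd. rewrite <- HY.
  destruct (sg k), (tg k); try congruence; simpl; auto.
Qed.

End Fixed.
End Build.

Lemma gm_facts m b : 1 < b < Gm m ->
  (1 <= m)%nat /\ (b - 1) * (2 * b + 1) < INR m * (b + 1) /\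
  ((exists k, m = (2 * k + 1)%nat) \/ 2 < MM m b).
Proof.
  intros [Hb HG]. unfold Gm in HG. cbv zeta in HG.
  destruct (Nat.Even_or_Odd m) as [[k Hk]|[k Hk]].
  - assert (Hev : Nat.even m = true) by (apply Nat.even_spec; exists k; auto).
    assert (Hd : Nat.div2 m = k) by (rewrite Hk; apply Nat.div2_double).
    rewrite Hev, Hd in HG.
    assert (Hk1 : (1 <= k)%nat).
    { destruct k; [simpl in HG; lra|lia]. }
    assert (Hk1n := Hk1). apply le_INR in Hk1. simpl in Hk1.
    assert (HmR : INR m = 2 * INR k) by (rewrite Hk, mult_INR; simpl; ring).
    split; [lia|]. split.
    + rewrite HmR. nra.
    + right. unfold MM. rewrite HmR. apply (Rmult_lt_reg_r (b - 1)); [lra|].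
      unfold Rdiv. rewrite Rmult_assoc, Rinv_l; lra.
  - assert (Hev : Nat.even m = false).
    { rewrite <- Nat.negb_odd. assert (Nat.odd m = true) by (apply Nat.odd_spec; exists k; auto).
      rewrite H; auto. }
    assert (Hd : Nat.div2 m = k).
    { rewrite Hk. replace (2 * k + 1)%nat with (S (2 * k)) by lia. apply Nat.div2_succ_double. }
    rewrite Hev, Hd in HG.
    assert (HmR : INR m = 2 * INR k + 1) by (rewrite Hk, plus_INR, mult_INR; simpl; ring).
    split; [lia|]. split; [|left; eauto].
    rewrite HmR. pose proof (pos_INR k) as Hk0.
    set (S := INR k ^ 2 + 6 * INR k + 5) in *.
    assert (HS : 0 <= S) by (unfold S; nra).
    assert (Hsq := sqrt_sqrt S HS).
    assert (Hsq0 := sqrt_pos S).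
    assert (Hq : b * b - (INR k + 1) * b - (INR k + 1) < 0).
    { destruct (Rle_dec (2 * b - (INR k + 1)) 0) as [Hn|Hp].
      - nra.
      - assert (Ht : 2 * b - (INR k + 1) < sqrt S) by lra.
        assert ((2 * b - (INR k + 1)) * (2 * b - (INR k + 1)) < sqrt S * sqrt S).
        { apply Rmult_le_0_lt_compat; lra. }
        rewrite Hsq in H. unfold S in H. simpl in H. nra. }
    nra.
Qed.

Lemma eps_ex m b : (1 <= m)%nat -> 1 < b -> (b - 1) * (2 * b + 1) < INR m * (b + 1) ->
  ((exists k, m = (2 * k + 1)%nat) \/ 2 < MM m b) ->
  exists eps, 0 < eps /\ 2 * eps <= MM m b - 1 /\ ww m b eps <= / (2 * (b + 1)) /\
    ((exists k, m = (2 * k + 1)%nat) \/ ww m b eps <= 0) /\ eps * (b + 1) <= MM m b.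
Proof.
  intros Hm Hb Hkey Hpar.
  assert (HMm : MM m b * (b - 1) = INR m) by (unfold MM; field; lra).
  assert (HM2 : MM m b * (b + 1) > 2 * b + 1).
  { apply (Rmult_lt_reg_r (b - 1)); [lra|]. nra. }
  assert (HM1 : 1 < MM m b).
  { destruct (Rle_dec (MM m b) 1); [|lra]. nra. }
  set (a1 := (MM m b - 1) / 2). set (a2 := / (2 * (b + 1)) - 1 + MM m b / 2).
  set (a5 := MM m b / (b + 1)).
  assert (Ha1 : 0 < a1) by (unfold a1; lra).
  assert (Ha2 : 0 < a2).
  { unfold a2. apply (Rmult_lt_reg_r (2 * (b + 1))); [lra|].
    rewrite Rmult_0_l. field_simplify; [|lra]. nra. }
  assert (Ha5 : 0 < a5) by (unfold a5; apply Rdiv_lt_0_compat; lra).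
  assert (Hc5 : forall e, 0 < e -> e <= a5 -> e * (b + 1) <= MM m b).
  { intros e He Hle. unfold a5 in Hle.
    apply (Rmult_le_compat_r (b + 1)) in Hle; [|lra].
    unfold Rdiv in Hle. rewrite Rmult_assoc, Rinv_l in Hle; lra. }
  destruct Hpar as [Hodd|Hev].
  - exists (Rmin a1 (Rmin a2 a5)).
    pose proof (Rmin_l a1 (Rmin a2 a5)). pose proof (Rmin_r a1 (Rmin a2 a5)).
    pose proof (Rmin_l a2 a5). pose proof (Rmin_r a2 a5).
    assert (0 < Rmin a1 (Rmin a2 a5)) by (apply Rmin_pos; [|apply Rmin_pos]; lra).
    unfold ww. split; [lra|]. split; [unfold a1 in *; lra|]. split; [unfold a2 in *; lra|].
    split; [left; auto|]. apply Hc5; lra.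
  - set (a4 := MM m b / 2 - 1).
    assert (Ha4 : 0 < a4) by (unfold a4; lra).
    exists (Rmin a1 (Rmin a2 (Rmin a5 a4))).
    pose proof (Rmin_l a1 (Rmin a2 (Rmin a5 a4))). pose proof (Rmin_r a1 (Rmin a2 (Rmin a5 a4))).
    pose proof (Rmin_l a2 (Rmin a5 a4)). pose proof (Rmin_r a2 (Rmin a5 a4)).
    pose proof (Rmin_l a5 a4). pose proof (Rmin_r a5 a4).
    assert (0 < Rmin a1 (Rmin a2 (Rmin a5 a4))) by (repeat apply Rmin_pos; lra).
    unfold ww. split; [lra|]. split; [unfold a1 in *; lra|]. split; [unfold a2 in *; lra|].
    split; [right; unfold a4 in *; lra|]. apply Hc5; lra.
Qed.

Theorem theorem5p1 (m : nat) (beta : R) :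
  1 < beta < Gm m ->
  exists c : R, 0 < c /\
    forall x : R, 0 < x < INR m / (beta - 1) ->
      Rbar_le (Finite c) (hdim m (Sigma beta m x)).
Proof.
  intros Hbeta. destruct (gm_facts m beta Hbeta) as [Hm [Hkey Hpar]].
  assert (Hb : 1 < beta) by (destruct Hbeta; auto).
  destruct (eps_ex m beta Hm Hb Hkey Hpar) as [eps [He0 [Hc1 [Hc2 [Hc4 Hc5]]]]].
  destruct (pow_unbounded beta (MM m beta / 2 / eps) Hb) as [A HA0].
  assert (HA : MM m beta / 2 <= beta ^ A * eps).
  { apply (Rmult_le_compat_r eps) in HA0; [|lra].
    unfold Rdiv in HA0. rewrite Rmult_assoc, Rinv_l in HA0; lra. }
  exists (s0 m (A + 2)). split; [apply s0_pos; lia|].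
  intros x Hx.
  destruct (prefix m beta eps Hm Hb He0 Hc5 x Hx) as [p0 [Hp0 HK]].
  assert (HxJ : inJ m beta x) by (unfold inJ, MM; lra).
  apply (hdim_lb m (A + 2) (length p0) _
    (ef m beta eps A Hm Hb He0 Hc1 Hc2 Hc4 HA p0 (Tw beta x p0))); [lia|lia| |].
  - intro sg. apply ef_Sigma; auto.
  - intros sg tg k Hag Hk. apply ef_diff; auto.
Qed.
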